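(* Let $T(x,z,t)=\sum_{n\ge0}\Theta_n(z,t)x^n$, with $\Theta_0=1$. (i) For the weights $a_j=1$ for all $j$, as formal power series in $x,z$, \[ T(x,z,t)=\frac{1-zt}{(1-zt)(1-x)-zx}. \] (ii) For the weights $a_j=1/j$, for complex $z,t$ with $zt\notin\{1,2,3,\dots\}$, as a formal power series in $x$, \[ T(x,z,t)={}_2F_1\big(1,\,1+z(1-t);\,1-zt;\,x\big)=\sum_{n\ge0}\frac{(1+z(1-t))_n}{(1-zt)_n}x^n, \] where $(c)_n=c(c+1)\cdots(c+n-1)$.
   Context: Let $\boldsymbol a=(a_j)_{j\ge1}$ be a sequence of positive reals. For $\vec\ell=(\ell_1,\dots,\ell_k)$ with $n\ge\ell_1\ge\cdots\ge\ell_k\ge1$ let $\sigma(\vec\ell)=|\{1\le j\le k-1:\ell_j=\ell_{j+1}\}|$ and $w(\vec\ell)=\prod_j a_{\ell_j}$. Let $\theta_{n;k}(t)=\sum_{n\ge\ell_1\ge\cdots\ge\ell_k\ge1}w(\vec\ell)t^{\sigma(\vec\ell)}$ ($\theta_{n;0}=1$) and $\Theta_n(z,t)=\sum_{k\ge0}\theta_{n;k}(t)z^k$ (so $\Theta_0=1$). *)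

(* Defs.v *)
From HB Require Import structures.
From mathcomp Require Import all_boot all_order all_algebra.
Set Implicit Arguments. Unset Strict Implicit. Unset Printing Implicit Defensive.
Import Order.TTheory GRing.Theory Num.Theory.
Local Open Scope ring_scope.

(* A sequence n >= l_1 >= ... >= l_k >= 1 is encoded as a k-tuple of
   ordinals i : 'I_n with l_j = i_j + 1, weakly decreasing. *)

Definition sigma (n : nat) (l : seq 'I_n) : nat :=
  count (fun p : 'I_n * 'I_n => p.1 == p.2) (zip l (behead l)).

(* theta_{n;k}(t) = sum over n >= l_1 >= ... >= l_k >= 1 of
   (prod_j a_{l_j}) t^{sigma(l)};  the weights are a : nat -> R, with a j = a_j
   (a 0 is never used). *)
Definition theta (R : ringType) (a : nat -> R) (n k : nat) (t : R) : R :=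
  \sum_(l : k.-tuple 'I_n |
          sorted (fun x y : 'I_n => (nat_of_ord y <= nat_of_ord x)%N) l)
    (\prod_(i <- l) a (nat_of_ord i).+1) * t ^+ sigma l.

(* Bivariate formal power series in (x, z): coefficient of x^n z^k is f n k. *)
Definition ps2_mul (R : ringType) (f g : nat -> nat -> R) (n k : nat) : R :=
  \sum_(i < n.+1) \sum_(j < k.+1) f i j * g (n - i)%N (k - j)%N.

(* T(x,z,t) = sum_n Theta_n(z,t) x^n = sum_{n,k} theta_{n;k}(t) x^n z^k *)
Definition Tcoef (R : ringType) (a : nat -> R) (t : R) (n k : nat) : R :=
  theta a n k t.

(* coefficients of (1 - z t)(1 - x) - z x = 1 - x - t z + (t - 1) x z *)
Definition Dcoef (R : ringType) (t : R) (n k : nat) : R :=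
  match n, k with
  | 0, 0 => 1
  | 1, 0 => -1
  | 0, 1 => - t
  | 1, 1 => t - 1
  | _, _ => 0
  end.

(* coefficients of 1 - z t *)
Definition Ncoef (R : ringType) (t : R) (n k : nat) : R :=
  match n, k with
  | 0, 0 => 1
  | 0, 1 => - t
  | _, _ => 0
  end.

Definition poch (R : ringType) (c : {poly R}) (n : nat) : {poly R} :=
  \prod_(i < n) (c + (i%:R)%:P).

(* Main.v *)
Require Import Defs.
From HB Require Import structures.
From mathcomp Require Import all_boot all_order all_algebra.
From mathcomp Require Import ring.
Import GRing.Theory.
Set Implicit Arguments. Unset Strict Implicit.
Local Open Scope ring_scope.

Lemma big_tuple_cons (R : comNzRingType) (T : finType) k (P : pred (seq T))
  (F : seq T -> R) :
  \sum_(u : k.+1.-tuple T | P u) F u =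
  \sum_(x : T) \sum_(v : k.-tuple T | P (x :: v)) F (x :: v).
Proof.
rewrite [RHS](pair_big_dep xpredT (fun x (v : k.-tuple T) => P (x :: v))) /=.
rewrite (reindex (fun p : T * k.-tuple T => [tuple of p.1 :: p.2])) /=.
  by [].
exists (fun u : k.+1.-tuple T => (thead u, [tuple of behead u])).
  by move=> [x v] _ /=; congr (_, _); apply: val_inj.
by move=> u _; rewrite [RHS]tuple_eta.
Qed.

Lemma big_tuple0 (R : comNzRingType) (T : finType) (P : pred (seq T))
  (F : seq T -> R) :
  \sum_(u : 0.-tuple T | P u) F u = if P [::] then F [::] else 0.
Proof.
rewrite big_mkcond /=.
rewrite (eq_bigr (fun _ => if P [::] then F [::] else 0)); last first.
  by move=> u _; rewrite [u]tuple0.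
by rewrite big_const card_tuple expn0 /= addr0.
Qed.

Definition rr (n : nat) : rel 'I_n := fun x y => (nat_of_ord y <= nat_of_ord x)%N.

Lemma rr_trans n : transitive (@rr n).
Proof. by move=> x y z; rewrite /rr => h1 h2; apply: leq_trans h2 h1. Qed.

Definition wt (R : comNzRingType) (a : nat -> R) (t : R) n (u : seq 'I_n) : R :=
  (\prod_(i <- u) a (nat_of_ord i).+1) * t ^+ sigma u.

Lemma sigma_cons n (y : 'I_n) v : sigma (y :: v) = ((ohead v == Some y) + sigma v)%N.
Proof.
case: v => [|z v] //=.
by rewrite /sigma /= eq_sym.
Qed.

Lemma wt_cons (R : comNzRingType) (a : nat -> R) (t : R) n (y : 'I_n) v :
  wt a t (y :: v) = a (nat_of_ord y).+1 * t ^+ (ohead v == Some y) * wt a t v.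
Proof.
rewrite /wt big_cons sigma_cons exprD.
rewrite -!mulrA; congr (_ * _).
by rewrite mulrCA mulrA.
Qed.

Definition Lsum (R : comNzRingType) (a : nat -> R) (t : R) n (x : nat) k : R :=
  \sum_(u : k.-tuple 'I_n | sorted (@rr n) u && all (fun y : 'I_n => (nat_of_ord y < x)%N) u)
     wt a t u.

Definition Esum (R : comNzRingType) (a : nat -> R) (t : R) n (y : 'I_n) k : R :=
  \sum_(u : k.-tuple 'I_n | sorted (@rr n) u && (ohead u == Some y)) wt a t u.

Lemma split1 n (y : 'I_n) (v : seq 'I_n) :
  (sorted (@rr n) v && all (@rr n y) v) && (ohead v == Some y) =
  sorted (@rr n) v && (ohead v == Some y).
Proof.
case: v => [|z v] //=.
have -> : (Some z == Some y) = (z == y) by [].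
rewrite (path_sortedE (@rr_trans n)).
case: eqP => [->|_]; last by rewrite !andbF.
rewrite /rr leqnn /= !andbT; by case: (all _ v); case: (sorted _ v).
Qed.

Lemma split2 n (y : 'I_n) (v : seq 'I_n) :
  (sorted (@rr n) v && all (@rr n y) v) && ~~ (ohead v == Some y) =
  sorted (@rr n) v && all (fun z : 'I_n => (nat_of_ord z < y)%N) v.
Proof.
case: v => [|z v] //=.
have -> : (Some z == Some y) = (z == y) by [].
rewrite (path_sortedE (@rr_trans n)).
case: eqP => [->|neq].
  by rewrite ltnn /= !andbF.
have hzy : (nat_of_ord z != nat_of_ord y) by apply/eqP => h; apply: neq; apply: val_inj.
have hle : rr y z = (z < y)%N by rewrite /rr leq_eqVlt (negbTE hzy).
rewrite hle andbT.
case hz: (all (rr z) v); case: (sorted _ v); case hlt: (z < y)%N => //=.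
apply/idP/idP => _; apply/allP => w /(allP hz); rewrite /rr => h.
  exact: leq_ltn_trans h hlt.
exact: leq_trans h (ltnW hlt).
Qed.

Lemma inner (R : comNzRingType) (a : nat -> R) (t : R) n (y : 'I_n) k :
  \sum_(v : k.-tuple 'I_n | sorted (@rr n) v && all (@rr n y) v) wt a t (y :: v) =
  a (nat_of_ord y).+1 * (Lsum a t n y k + t * Esum a t y k).
Proof.
rewrite (bigID (fun v : k.-tuple 'I_n => ohead v == Some y)) /= addrC.
rewrite mulrDr; congr (_ + _).
  rewrite /Lsum mulr_sumr; rewrite (eq_bigl (fun v : k.-tuple 'I_n => sorted (@rr n) v && all (fun z : 'I_n => (nat_of_ord z < y)%N) v) _ (fun v => split2 y v)).
  apply: eq_bigr => v /andP[_ /allP h]; rewrite wt_cons.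
  suff -> : (ohead v == Some y) = false by rewrite expr0 mulr1.
  case: v h => -[|z v] //= _ h.
  apply/negP => /eqP[e]; have := h z; rewrite inE eqxx e ltnn; by move/(_ isT).
rewrite /Esum mulr_sumr mulr_sumr; rewrite (eq_bigl (fun v : k.-tuple 'I_n => sorted (@rr n) v && (ohead v == Some y)) _ (fun v => split1 y v)).
apply: eq_bigr => v /andP[_ /eqP hv]; rewrite wt_cons hv eqxx expr1; ring.
Qed.

Lemma Lsum_S (R : comNzRingType) (a : nat -> R) (t : R) n x k :
  Lsum a t n x k.+1 =
  \sum_(y : 'I_n | (nat_of_ord y < x)%N) a (nat_of_ord y).+1 * (Lsum a t n y k + t * Esum a t y k).
Proof.
rewrite {1}/Lsum (@big_tuple_cons R 'I_n k (fun u : seq 'I_n => sorted (@rr n) u && all (fun y : 'I_n => (nat_of_ord y < x)%N) u) (@wt R a t n)) [RHS]big_mkcond /=; apply: eq_bigr => y _.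
case: ifP => hy.
  rewrite -inner; apply: eq_bigl => v /=.
  rewrite (path_sortedE (@rr_trans n)).
  case hs: (sorted _ v); rewrite ?andbF //=.
  case ha: (all (rr y) v) => //=.
  apply/allP => w /(allP ha); rewrite /rr => h; exact: leq_ltn_trans h hy.
by apply: big_pred0 => v /=; rewrite andbF.
Qed.

Lemma Esum_S (R : comNzRingType) (a : nat -> R) (t : R) n (y : 'I_n) k :
  Esum a t y k.+1 = a (nat_of_ord y).+1 * (Lsum a t n y k + t * Esum a t y k).
Proof.
rewrite {1}/Esum (@big_tuple_cons R 'I_n k (fun u : seq 'I_n => sorted (@rr n) u && (ohead u == Some y)) (@wt R a t n)) (bigD1 y) //= [X in _ + X]big1 ?addr0.
  rewrite -inner; apply: eq_bigl => v /=.
  by rewrite (path_sortedE (@rr_trans n)) eqxx andbT andbC.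
move=> z hz; apply: big_pred0 => v /=.
have -> : (Some z == Some y) = (z == y) by [].
by rewrite (negbTE hz) andbF.
Qed.

Lemma Lsum0 (R : comNzRingType) (a : nat -> R) (t : R) n x : Lsum a t n x 0 = 1.
Proof. by rewrite /Lsum (@big_tuple0 R 'I_n (fun u : seq 'I_n => sorted (@rr n) u && all (fun y : 'I_n => (nat_of_ord y < x)%N) u) (@wt R a t n)) /= /wt big_nil mul1r. Qed.

Lemma Esum0 (R : comNzRingType) (a : nat -> R) (t : R) n (y : 'I_n) : Esum a t y 0 = 0.
Proof. by rewrite /Esum (@big_tuple0 R 'I_n (fun u : seq 'I_n => sorted (@rr n) u && (ohead u == Some y)) (@wt R a t n)) /=. Qed.

Fixpoint ef (R : comNzRingType) (a : nat -> R) (t : R) (k y : nat) : R :=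
  match k with
  | 0 => 0
  | k'.+1 => a y.+1 * (match k' with 0 => 1 | _.+1 => \sum_(z < y) ef a t k' z end
                        + t * ef a t k' y)
  end.

Definition lf (R : comNzRingType) (a : nat -> R) (t : R) (k x : nat) : R :=
  match k with 0 => 1 | _.+1 => \sum_(z < x) ef a t k z end.

Lemma efS (R : comNzRingType) (a : nat -> R) (t : R) k y :
  ef a t k.+1 y = a y.+1 * (lf a t k y + t * ef a t k y).
Proof. by case: k. Qed.

Lemma LE_eq (R : comNzRingType) (a : nat -> R) (t : R) n k :
  (forall y : 'I_n, Esum a t y k = ef a t k y) /\
  (forall x, (x <= n)%N -> Lsum a t n x k = lf a t k x).
Proof.
elim: k => [|k [IHE IHL]].
  by split => [y|x _]; rewrite ?Esum0 ?Lsum0.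
have HE : forall y : 'I_n, Esum a t y k.+1 = ef a t k.+1 y.
  by move=> y; rewrite Esum_S efS IHE IHL // ltnW.
split => // x hx.
rewrite Lsum_S /lf (big_ord_widen _ _ hx); apply: eq_bigr => y _.
by rewrite -HE Esum_S.
Qed.

Lemma theta_lf (R : comNzRingType) (a : nat -> R) (t : R) n k :
  theta a n k t = lf a t k n.
Proof.
have [_ H] := LE_eq a t n k; rewrite -H //.
rewrite /theta /Lsum; apply: eq_bigl => u.
suff -> : all (fun y : 'I_n => (nat_of_ord y < n)%N) u by rewrite andbT.
by apply/allP => y _; exact: ltn_ord.
Qed.

Lemma lfS (R : comNzRingType) (a : nat -> R) (t : R) k x :
  lf a t k x.+1 = lf a t k x + ef a t k x.
Proof. by case: k => [|k]; rewrite /lf ?addr0 // big_ord_recr. Qed.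

Lemma lf0 (R : comNzRingType) (a : nat -> R) (t : R) k :
  lf a t k 0 = (k == 0%N)%:R.
Proof. by case: k => [|k]; rewrite /lf ?big_ord0. Qed.

Lemma conv01 (R : comNzRingType) (G : nat -> nat -> R) k :
  (forall j m, (1 < m)%N -> G j m = 0) ->
  \sum_(j < k.+1) G j (k - j)%N = G k 0%N + (if k is k'.+1 then G k' 1%N else 0).
Proof.
move=> HG; case: k => [|k].
  by rewrite big_ord1 addr0.
rewrite big_ord_recr /= subnn addrC; congr (_ + _).
rewrite big_ord_recr /= subSnn big1 ?add0r // => j _.
apply: HG; rewrite subSn; last by apply: leq_trans (ltnW (ltn_ord j)) _.
by rewrite ltnS subn_gt0.
Qed.

Lemma partI (R : comNzRingType) (t : R) (n k : nat) :
  ps2_mul (Tcoef (fun _ => 1) t) (Dcoef t) n k = Ncoef t n k.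
Proof.
set a := fun _ : nat => (1 : R).
have HD : forall j m, (1 < m)%N -> Dcoef t m j = 0.
  by move=> j [|[|m]].
have HD' : forall i j m, (1 < m)%N -> Tcoef a t i j * Dcoef t 0 m = 0.
  by move=> i j [|[|m]] // _; rewrite mulr0.
have HD1 : forall i j m, (1 < m)%N -> Tcoef a t i j * Dcoef t 1 m = 0.
  by move=> i j [|[|m]] // _; rewrite mulr0.
rewrite /ps2_mul.
rewrite (conv01 (G := fun i m => \sum_(j < k.+1) Tcoef a t i j * Dcoef t m (k - j))); last first.
  by move=> i m hm; apply: big1 => j _; rewrite HD ?mulr0.
rewrite (conv01 (G := fun j m => Tcoef a t n j * Dcoef t 0 m)) //.
case: n => [|n].
  rewrite /Tcoef; case: k => [|k]; rewrite !theta_lf lf0 /=; first by rewrite mulr1 !addr0.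
  rewrite mul0r add0r lf0; case: k => [|k] /=; by rewrite ?mul1r ?mul0r ?addr0.
rewrite (conv01 (G := fun j m => Tcoef a t n j * Dcoef t 1 m)) //.
rewrite /Tcoef; case: k => [|k] /=; rewrite !theta_lf.
  by rewrite /lf !mulr1 !addr0 mulrN1 subrr.
rewrite !lfS efS /a !mul1r; ring.
all: move=> j m hm; by [apply: HD1 | apply: HD'].
Qed.

Definition eqK (R : comNzRingType) (K : nat) (p q : {poly R}) :=
  forall k, (k <= K)%N -> p`_k = q`_k.

Lemma eqK_trans (R : comNzRingType) K (p q r : {poly R}) :
  eqK K p q -> eqK K q r -> eqK K p r.
Proof. by move=> h1 h2 k hk; rewrite h1 // h2. Qed.

Lemma eqK_mulr (R : comNzRingType) K (p q r : {poly R}) :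
  eqK K p q -> eqK K (p * r) (q * r).
Proof.
move=> h k hk; rewrite !coefM; apply: eq_bigr => i _; rewrite h //.
by have := ltn_ord i; rewrite ltnS => hi; apply: leq_trans hi hk.
Qed.

Lemma eqK_mull (R : comNzRingType) K (p q r : {poly R}) :
  eqK K p q -> eqK K (r * p) (r * q).
Proof. by move=> h; rewrite ![r * _]mulrC; apply: eqK_mulr. Qed.

Lemma eqK_addl (R : comNzRingType) K (p q r : {poly R}) :
  eqK K p q -> eqK K (r + p) (r + q).
Proof. by move=> h k hk; rewrite !coefD h. Qed.

Lemma pochS (R : comNzRingType) (c : {poly R}) n :
  poch c n.+1 = poch c n * (c + (n%:R)%:P).
Proof. by rewrite /poch big_ord_recr. Qed.

Lemma partII (R : fieldType) (HR : [pchar R] =i pred0) (t : R) (n k : nat) :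
      \sum_(i < k.+1)
         theta (fun j => (j%:R)^-1) n i t * (poch (1 - t *: 'X) n)`_(k - i)
      = (poch (1 + (1 - t) *: 'X) n)`_k.
Proof.
set a := fun j : nat => (j%:R : R)^-1.
pose A K m := \poly_(i < K.+1) lf a t i m.
pose B K m := \poly_(i < K.+1) ef a t i m.
suff H : forall K m, eqK K (A K m * poch (1 - t *: 'X) m) (poch (1 + (1 - t) *: 'X) m).
  rewrite -(H k n k (leqnn k)) coefM; apply: eq_bigr => i _.
  by rewrite coef_poly ltn_ord theta_lf.
move=> K; elim=> [|m IH].
  rewrite /poch !big_ord0 mulr1.
  move=> j hj; rewrite coef_poly coef1 ltnS hj lf0.
  by case: j {hj}.
have Hc : ((m.+1)%:R : R) != 0 by rewrite (pcharf0P _).1.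
have HA : A K m.+1 = A K m + B K m.
  by apply/polyP => j; rewrite coefD !coef_poly; case: ifP; rewrite ?addr0 // lfS.
set U := 1 - t *: 'X + (m%:R)%:P.
set V := 1 + (1 - t) *: 'X + (m%:R)%:P.
have HUV : V = U + 'X.
  rewrite /U /V; rewrite scalerBl scale1r; ring.
have HB : eqK K (U * B K m) ('X * A K m).
  move=> j hj; rewrite /U !mulrDl mulNr mul1r -scalerAl.
  rewrite !coefD coefN coefZ coefCM !coefXM !coef_poly ltnS hj.
  case: j hj => [|j] hj; first by rewrite !mulr0 subr0 addr0.
  rewrite -[(j.+1 == 0)%N]/false -[j.+1.-1]/j ltnS (ltnW hj) (efS a t j m).
  set X := a m.+1 * _.
  have HX : X + m%:R * X = lf a t j m + t * ef a t j m.
    by rewrite -{1}[X]mul1r -mulrDl nat1r /X mulrA [_ * a _]mulrC /a /= mulVf // mul1r.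
  by rewrite addrAC HX addrK.
rewrite !pochS -/U -/V.
have E1 : A K m.+1 * (poch (1 - t *: 'X) m * U) =
          poch (1 - t *: 'X) m * (U * A K m + U * B K m) by rewrite HA; ring.
rewrite E1.
apply: eqK_trans (eqK_mull _ (eqK_addl _ HB)) _.
have E2 : poch (1 - t *: 'X) m * (U * A K m + 'X * A K m) =
          V * (A K m * poch (1 - t *: 'X) m) by rewrite HUV; ring.
rewrite E2.
apply: eqK_trans (eqK_mull _ IH) _.
by move=> j _; rewrite mulrC.
Qed.

Theorem mainTheorem8 :
  (* (i) a_j = 1:  T(x,z,t) * ((1-zt)(1-x) - zx) = 1 - zt  in R[[x,z]] *)
  (forall (R : comNzRingType) (t : R) (n k : nat),
      ps2_mul (Tcoef (fun _ => 1) t) (Dcoef t) n k = Ncoef t n k) /\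
  (* (ii) a_j = 1/j:  for every n, Theta_n(z,t) * (1 - zt)_n = (1 + z(1-t))_n
     in R[[z]], i.e. the x^n-coefficient of T is (1+z(1-t))_n / (1-zt)_n *)
  (forall (R : fieldType) (HR : [pchar R] =i pred0) (t : R) (n k : nat),
      \sum_(i < k.+1)
         theta (fun j => (j%:R)^-1) n i t * (poch (1 - t *: 'X) n)`_(k - i)
      = (poch (1 + (1 - t) *: 'X) n)`_k).
Proof.
split; [exact: partI | exact: partII].
Qed.
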